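(* Let $R$ be a commutative ring with identity. The power series ring $R[[x]]$ is complemented if and only if $R$ is reduced and for each countably generated ideal $I$ of $R$ there is a countably generated ideal $J$ of $R$ such that $IJ=0$ and $I+J$ is a dense ideal of $R$.
   Context: An element $a$ of a ring $A$ is complemented if there is $b\in A$ with $ab=0$ and $a+b$ a regular element (non-zero-divisor) of $A$; $A$ is complemented if every element is complemented. An ideal is dense if its annihilator is zero. *)

(* Defs.v *)
From HB Require Import structures.
From mathcomp Require Import all_boot all_order all_algebra.
Set Implicit Arguments. Unset Strict Implicit. Unset Printing Implicit Defensive.
Import GRing.Theory.
Local Open Scope ring_scope.

(* A commutative ring is described here by its carrier together with its
   zero, addition and multiplication; for a MathComp ring these are 0, +, *. *)

Definition regular_in (T : Type) (zero : T) (mul : T -> T -> T) (a : T) : Prop :=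
  forall c : T, mul a c = zero -> c = zero.

Definition complemented_elt_in (T : Type) (zero : T) (add mul : T -> T -> T)
    (a : T) : Prop :=
  exists b : T, mul a b = zero /\ regular_in zero mul (add a b).

Definition complemented_in (T : Type) (zero : T) (add mul : T -> T -> T) : Prop :=
  forall a : T, complemented_elt_in zero add mul a.

Definition complemented (R : comPzRingType) : Prop :=
  complemented_in (0 : R) +%R *%R.

(* A power series is its coefficient sequence f : nat -> R
   (f n = coefficient of x^n), with coefficientwise addition and the
   Cauchy product. *)
Definition powerseries (R : comPzRingType) := nat -> R.

Definition ps_zero (R : comPzRingType) : powerseries R := fun _ => 0.
Definition ps_add (R : comPzRingType) (f g : powerseries R) : powerseries R :=
  fun n => f n + g n.
Definition ps_mul (R : comPzRingType) (f g : powerseries R) : powerseries R :=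
  fun n => \sum_(i < n.+1) f i * g (n - i)%N.

Definition powerseries_complemented (R : comPzRingType) : Prop :=
  complemented_in (@ps_zero R) (@ps_add R) (@ps_mul R).

Definition reduced (R : comPzRingType) : Prop :=
  forall (x : R) (n : nat), x ^+ n = 0 -> x = 0.

Definition is_ideal (R : comPzRingType) (I : R -> Prop) : Prop :=
  [/\ I 0,
      (forall x y, I x -> I y -> I (x + y)) &
      (forall r x, I x -> I (r * x))].

Definition ideal_gen (R : comPzRingType) (g : nat -> R) : R -> Prop :=
  fun x => exists (n : nat) (c : nat -> R), x = \sum_(i < n) c i * g i.

(* A countable
   generating set may be enumerated (with repetitions) as a sequence; the
   empty generating set is replaced by the sequence constantly 0. *)
Definition countably_generated (R : comPzRingType) (I : R -> Prop) : Prop :=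
  exists g : nat -> R, forall x, I x <-> ideal_gen g x.

Definition ideal_prod_zero (R : comPzRingType) (I J : R -> Prop) : Prop :=
  forall x y, I x -> J y -> x * y = 0.

Definition ideal_sum (R : comPzRingType) (I J : R -> Prop) : R -> Prop :=
  fun z => exists x y, [/\ I x, J y & z = x + y].

Definition dense (R : comPzRingType) (I : R -> Prop) : Prop :=
  forall r : R, (forall x, I x -> r * x = 0) -> r = 0.

(* Main.v *)
Require Import Defs.
From mathcomp Require Import all_boot all_order all_algebra.
From Stdlib Require Import FunctionalExtensionality.
From mathcomp Require Import zify.
Set Implicit Arguments. Unset Strict Implicit. Unset Printing Implicit Defensive.
Import GRing.Theory.
Local Open Scope ring_scope.

Section Aux.
Variable R : comPzRingType.

Definition sqz := forall x : R, x * x = 0 -> x = 0.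

Lemma sqz_reduced : sqz -> reduced R.
Proof.
move=> H x n; case: n => [|n].
  by rewrite expr0 => h; rewrite -(mulr1 x) h mulr0.
elim: n => [|n IH]; first by rewrite expr1.
move=> h; apply: IH; apply: H.
rewrite -exprD (_ : (n.+1 + n.+1 = n.+2 + n)%N); last by rewrite !(addSn, addnS).
by rewrite exprD h mul0r.
Qed.

Lemma reduced_sqz : reduced R -> sqz.
Proof. by move=> H x hx; apply: (H x 2); rewrite expr2. Qed.

Definition cst (a : R) : powerseries R := fun n => if n == 0%N then a else 0.

Lemma ps_mul_cstl a F n : ps_mul (cst a) F n = a * F n.
Proof.
rewrite /ps_mul big_ord_recl /= subn0 big1 ?addr0 // => i _.
by rewrite /cst /= mul0r.
Qed.

Lemma ps_mul_cstr a F n : ps_mul F (cst a) n = F n * a.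
Proof.
rewrite /ps_mul big_ord_recr /= subnn big1 ?add0r // => i _.
rewrite /cst /=; case: eqP => [/eqP|]; last by rewrite mulr0.
by rewrite subn_eq0 leqNgt ltn_ord.
Qed.

Lemma gen0 (g : nat -> R) : ideal_gen g 0.
Proof. by exists 0%N, (fun _ => 0); rewrite big_ord0. Qed.

Lemma gen_mem (g : nat -> R) i : ideal_gen g (g i).
Proof.
exists i.+1, (fun j => if j == i then 1 else 0).
rewrite big_ord_recr /= eqxx mul1r big1 ?add0r // => j _.
by rewrite (ltn_eqF (ltn_ord j)) mul0r.
Qed.

Lemma pad (g : nat -> R) n N (c : nat -> R) : (n <= N)%N ->
  \sum_(i < N) (if (i < n)%N then c i else 0) * g i = \sum_(i < n) c i * g i.
Proof.
move=> hn; rewrite (big_ord_widen _ (fun i => c i * g i) hn) [RHS]big_mkcond /=.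
by apply: eq_bigr => i _; case: ifP; rewrite ?mul0r.
Qed.

Lemma gen_ideal (g : nat -> R) : is_ideal (ideal_gen g).
Proof.
split; first exact: gen0.
  move=> x y [n [c ->]] [m [d ->]].
  exists (n + m)%N, (fun i => (if (i < n)%N then c i else 0) + (if (i < m)%N then d i else 0)).
  rewrite -(pad g c (leq_addr m n)) -(pad g d (leq_addl n m)) -big_split /=.
  by apply: eq_bigr => i _; rewrite mulrDl.
move=> r x [n [c ->]]; exists n, (fun i => r * c i).
by rewrite mulr_sumr; apply: eq_bigr => i _; rewrite mulrA.
Qed.

Lemma gen_ann (g : nat -> R) r x : (forall i, r * g i = 0) -> ideal_gen g x -> r * x = 0.
Proof.
move=> H [n [c ->]]; rewrite mulr_sumr big1 // => i _.
by rewrite mulrCA H mulr0.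
Qed.

Lemma gen_prod (g h : nat -> R) x y : (forall i j, g i * h j = 0) ->
  ideal_gen g x -> ideal_gen h y -> x * y = 0.
Proof.
move=> H [n [c ->]] hy; rewrite mulr_suml big1 // => i _.
by rewrite -mulrA (gen_ann (r := g i) _ hy) ?mulr0.
Qed.

Lemma arm_step (H : sqz) (a b : nat -> R) n :
  (forall i j, (i + j < n)%N -> a i * b j = 0) ->
  \sum_(i < n.+1) a i * b (n - i)%N = 0 ->
  forall k, (k <= n)%N -> (forall l, (l < k)%N -> a l * b (n - l)%N = 0) ->
  a k * b (n - k)%N = 0.
Proof.
move=> IH hsum k hkn hprev; apply: H.
have hk : (k < n.+1)%N by [].
have : a k * (\sum_(i < n.+1) a i * b (n - i)%N) = a k * (a k * b (n - k)%N).
  rewrite mulr_sumr (bigD1 (Ordinal hk)) //= big1 ?addr0 // => i hik.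
  case: (ltngtP i k) => [hl|hg|he].
  - by rewrite hprev ?mulr0.
  - rewrite mulrCA IH ?mulr0 //; have := ltn_ord i; lia.
  - by move: hik; rewrite -val_eqE /= he eqxx.
rewrite hsum mulr0 => /esym h.
by rewrite -mulrA [b _ * _]mulrC mulrA h mul0r.
Qed.

Lemma arm (H : sqz) (a b : nat -> R) :
  (forall n, ps_mul a b n = 0) -> forall i j, a i * b j = 0.
Proof.
move=> hab.
suff S : forall n i j, (i + j < n)%N -> a i * b j = 0.
  by move=> i j; apply: (S (i + j).+1).
elim=> [//|n IH] i j hij.
case: (ltnP (i + j) n) => [|hge]; first exact: IH.
have hj : j = (n - i)%N by lia.
have hin : (i <= n)%N by lia.
rewrite hj; clear hj hij hge.
suff K : forall m k, (k <= m)%N -> (k <= n)%N -> a k * b (n - k)%N = 0.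
  exact: (K i i (leqnn i) hin).
have hs := hab n; rewrite /ps_mul in hs.
elim=> [|m IHm] k hk hkn.
  apply: (arm_step H IH hs hkn) => l; lia.
case: (leqP k m) => [hkm|hmk]; first exact: IHm.
apply: (arm_step H IH hs hkn) => l hl; apply: IHm; lia.
Qed.
End Aux.

Theorem mainTheorem3 (R : comPzRingType) :
  powerseries_complemented R <->
  (reduced R /\
   forall I : R -> Prop, is_ideal I -> countably_generated I ->
     exists J : R -> Prop,
       [/\ is_ideal J, countably_generated J, ideal_prod_zero I J &
           dense (ideal_sum I J)]).
Proof.
split.
  move=> Hc.
  have Hsqz : sqz R.
    move=> a ha; have [B [hAB hreg]] := Hc (cst a).
    have hB : forall n, a * B n = 0 by move=> n; rewrite -ps_mul_cstl hAB.
    have : cst a = @ps_zero R.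
      apply: hreg; apply: functional_extensionality => n.
      rewrite ps_mul_cstr /ps_add /ps_zero mulrDl [B n * a]mulrC hB addr0.
      by rewrite /cst; case: eqP => _; rewrite ?ha ?mul0r.
    by move/(congr1 (fun f => f 0%N)); rewrite /cst eqxx.
  split; first exact: sqz_reduced.
  move=> I hI [g hg]; have [h [hgh hreg]] := Hc g.
  have hgh' : forall n, ps_mul g h n = 0 by move=> n; rewrite hgh.
  have A := arm Hsqz hgh'.
  have I0 : I 0 by case: hI.
  exists (ideal_gen h); split.
  - exact: gen_ideal.
  - by exists h.
  - by move=> x y /hg hx hy; exact: gen_prod A hx hy.
  - move=> r hr.
    have rg : forall i, r * g i = 0.
      move=> i; apply: hr; exists (g i), 0; split; last by rewrite addr0.
        by apply/hg; exact: gen_mem.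
      exact: gen0.
    have rh : forall i, r * h i = 0.
      move=> i; apply: hr; exists 0, (h i); split; last by rewrite add0r.
        by [].
      exact: gen_mem.
    have : cst r = @ps_zero R.
      apply: hreg; apply: functional_extensionality => n.
      by rewrite ps_mul_cstr /ps_add /ps_zero mulrDl ![_ * r]mulrC rg rh addr0.
    by move/(congr1 (fun f => f 0%N)); rewrite /cst eqxx.
case=> Hred Hid f; have Hsqz := reduced_sqz Hred.
have [J [hJ [k hk] hprod hdense]] :=
  Hid (ideal_gen f) (gen_ideal f) (ex_intro _ f (fun x => iff_refl _)).
have fk : forall i j, f i * k j = 0.
  by move=> i j; apply: hprod; [exact: gen_mem | apply/hk; exact: gen_mem].
exists k; split.
  apply: functional_extensionality => n; rewrite /ps_mul /ps_zero big1 // => i _.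
  all: try exact: fk.
move=> c hc.
have A : forall i j, (f i + k i) * c j = 0.
  by apply: (arm Hsqz (a := ps_add f k) (b := c)) => n; rewrite hc.
have fc : forall i j, f i * c j = 0.
  move=> i j; apply: Hsqz.
  have e : f i * f i * c j = 0.
    by have := congr1 (fun x => f i * x) (A i j); rewrite /= mulr0 mulrA mulrDr fk addr0.
  by rewrite mulrA [f i * c j * f i]mulrC mulrA e mul0r.
have kc : forall i j, k i * c j = 0.
  by move=> i j; have := A i j; rewrite mulrDl fc add0r.
apply: functional_extensionality => j; apply: hdense => z [x [y [hx hy ->]]].
rewrite mulrDr (gen_ann _ hx) ?(gen_ann _ (proj1 (hk y) hy)) ?addr0 // => i;
  by rewrite mulrC.
Qed.
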